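(* Let $p,q,r$ be positive integers. Then each of the following hypergraphs admits a decomposition into tight $9$-cycles: (i) $K^{(3)}_{3p,3q,3r}$ for all $p,q,r\ge 1$; (ii) $K^{(3)}(3p\,|\,3q)$ for all $p\ge 2$ and $q\ge 1$; (iii) $C^{(3)}(3p,3q)$ for all $p,q\ge 2$.
   Context: For disjoint sets $A,B,C$ of sizes $a,b,c$, $K^{(3)}_{a,b,c}$ denotes the complete $3$-partite $3$-uniform hypergraph on $A\cup B\cup C$: a triple $T$ is an edge iff $|T\cap A|=|T\cap B|=|T\cap C|=1$. For disjoint sets $A,B$ with $|A|=a$, $|B|=b$, $K^{(3)}(a\,|\,b)$ denotes the $3$-uniform hypergraph on $A\cup B$ whose edges are exactly the triples $T$ with $|T\cap A|=2$ and $|T\cap B|=1$; and $C^{(3)}(a,b)$ (crossing triplets) denotes the $3$-uniform hypergraph on $A\cup B$ whose edges are exactly the triples meeting both $A$ and $B$. A (3-uniform tight) $k$-cycle is given by a cyclic sequence $v_1,\dots,v_k$ of $k$ distinct vertices, its edges being the triples $\{v_i,v_{i+1},v_{i+2}\}$ ($i=1,\dots,k$, indices mod $k$). A decomposition is a collection of cycles whose edge sets partition the edge set. *)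

(* Defs.v *)
From mathcomp Require Import all_boot.
Set Implicit Arguments. Unset Strict Implicit. Unset Printing Implicit Defensive.

Section Hyper.
Variable V : finType.

Definition K3partite (A B C : {set V}) : {set {set V}} :=
  [set T : {set V} | [&& #|T| == 3, #|T :&: A| == 1, #|T :&: B| == 1
                        & #|T :&: C| == 1]].

Definition K3split (A B : {set V}) : {set {set V}} :=
  [set T : {set V} | [&& #|T| == 3, #|T :&: A| == 2 & #|T :&: B| == 1]].

Definition C3crossing (A B : {set V}) : {set {set V}} :=
  [set T : {set V} | [&& #|T| == 3, T \subset A :|: B,
                        T :&: A != set0 & T :&: B != set0]].

(* Edges of the tight cycle given by the cyclic sequence s = v_1 ... v_k:
   the triples {v_i, v_(i+1), v_(i+2)}, indices mod k. *)
Definition tight_cycle_edges (s : seq V) : seq {set V} :=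
  [seq [set x.1.1; x.1.2; x.2] | x <- zip (zip s (rot 1 s)) (rot 2 s)].

Definition tight_cycle (k : nat) (s : seq V) : bool := (size s == k) && uniq s.

(* H decomposes into tight k-cycles: a collection of tight k-cycles whose
   edge sets partition the edge set of H (each edge of H is an edge of
   exactly one cycle, exactly once, and cycles use only edges of H). *)
Definition tight_cycle_decomposable (k : nat) (H : {set {set V}}) : Prop :=
  exists cs : seq (seq V),
    all (tight_cycle k) cs /\
    perm_eq (flatten [seq tight_cycle_edges c | c <- cs]) (enum H).

End Hyper.

(* Main.v *)
Require Import Defs.
From mathcomp Require Import all_boot.
From mathcomp Require Import zify.
Set Implicit Arguments. Unset Strict Implicit. Unset Printing Implicit Defensive.

Section Gen.
Variable V : finType.
Implicit Types (A B C X Y Z W T : {set V}) (H : {set {set V}}).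

Lemma dec_set0 k : tight_cycle_decomposable k (set0 : {set {set V}}).
Proof. by exists [::]; split => //=; rewrite enum_set0. Qed.

Lemma dec_union k H1 H2 : [disjoint H1 & H2] ->
  tight_cycle_decomposable k H1 -> tight_cycle_decomposable k H2 ->
  tight_cycle_decomposable k (H1 :|: H2).
Proof.
move=> dH [c1 [a1 p1]] [c2 [a2 p2]]; exists (c1 ++ c2); split.
  by rewrite all_cat a1 a2.
rewrite map_cat flatten_cat.
apply: perm_trans (perm_cat p1 p2) _.
apply: uniq_perm.
- rewrite cat_uniq !enum_uniq andbT /=; apply/hasPn => T; rewrite !mem_enum => h2.
  by rewrite (disjointFl dH h2).
- by rewrite enum_uniq.
- by move=> T; rewrite mem_cat !mem_enum in_setU.
Qed.

Lemma disjU X Y Z : [disjoint X & Z] -> [disjoint Y & Z] -> [disjoint X :|: Y & Z].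
Proof. by rewrite -!setI_eq0 setIUl => /eqP-> /eqP->; rewrite setU0. Qed.

Lemma cardIU T X Y : [disjoint X & Y] -> #|T :&: (X :|: Y)| = #|T :&: X| + #|T :&: Y|.
Proof.
move=> d; rewrite setIUr cardsU setIACA setIid (disjoint_setI0 d) setI0 cards0.
by rewrite subn0.
Qed.

Lemma cardIle T X : #|T :&: X| <= #|T|.
Proof. exact/subset_leq_card/subsetIl. Qed.

Lemma sum2 T X Y : [disjoint X & Y] -> #|T :&: X| + #|T :&: Y| <= #|T|.
Proof. by move=> d; rewrite -(cardIU _ d) cardIle. Qed.

Lemma sum3 T X Y Z : [disjoint X & Y] -> [disjoint X & Z] -> [disjoint Y & Z] ->
  #|T :&: X| + #|T :&: Y| + #|T :&: Z| <= #|T|.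
Proof.
move=> dXY dXZ dYZ; rewrite -(cardIU _ dXY) -cardIU; last exact: disjU.
exact: cardIle.
Qed.

Lemma sum4 T X Y Z W : [disjoint X & Y] -> [disjoint X & Z] -> [disjoint Y & Z] ->
  [disjoint X & W] -> [disjoint Y & W] -> [disjoint Z & W] ->
  #|T :&: X| + #|T :&: Y| + #|T :&: Z| + #|T :&: W| <= #|T|.
Proof.
move=> dXY dXZ dYZ dXW dYW dZW; rewrite -(cardIU _ dXY) -cardIU; last exact: disjU.
rewrite -cardIU; first exact: cardIle.
by apply: disjU => //; apply: disjU.
Qed.

Lemma subE T X : (T \subset X) = (#|T| <= #|T :&: X|).
Proof.
rewrite -subsetIidl; apply/idP/idP => h.
  exact: subset_leq_card.
have e : T :&: X = T by apply/eqP; rewrite eqEcard subsetIl.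
by rewrite e.
Qed.

End Gen.

Definition trip (c : seq nat) : seq (seq nat) :=
  [seq [:: x.1.1; x.1.2; x.2] | x <- zip (zip c (rot 1 c)) (rot 2 c)].
Definition sort3 (t : seq nat) := sort leq t.
Definition cnt (lab : seq nat) (k : nat) (t : seq nat) :=
  count (fun i => nth 3 lab i == k) t.
Definition tripok (lab m : seq nat) (t : seq nat) :=
  [&& size t == 3, uniq t, all (fun i => i < size lab) t &
      all (fun k => cnt lab k t == nth 0 m k) (iota 0 3)].
Definition check (lab m : seq nat) (cs : seq (seq nat)) : bool :=
  let n := size lab in
  let L := flatten (map trip cs) in
  [&& all (fun c => (size c == 9) && uniq c && all (fun i => i < n) c) cs,
      uniq (map sort3 L),
      all (tripok lab m) L &
      all (fun a => all (fun b => all (fun c =>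
         tripok lab m [:: a; b; c] ==> (sort3 [:: a; b; c] \in map sort3 L))
         (iota 0 n)) (iota 0 n)) (iota 0 n)].

Lemma zip_map2 (A B C D : Type) (f : A -> C) (g : B -> D) s t :
  zip (map f s) (map g t) = map (fun p => (f p.1, g p.2)) (zip s t).
Proof. by elim: s t => [|x s IH] [|y t] //=; rewrite IH. Qed.

Lemma uniq_map_key (T1 T2 T3 : eqType) (E : T1 -> T2) (f : T1 -> T3) (L : seq T1) :
  uniq (map f L) -> {in L &, forall t t', E t = E t' -> f t = f t'} ->
  uniq (map E L).
Proof.
elim: L => [|t L IH] //= /andP[nf uf] h; apply/andP; split; last first.
  by apply: IH => // x y xL yL; apply: h; rewrite inE ?xL ?yL orbT.
apply/mapP => -[t' t'L e]; move/negP: nf; apply; apply/mapP; exists t' => //.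
by apply: h; rewrite ?inE ?eqxx ?t'L ?orbT.
Qed.

Section Base.
Variable V : finType.

Definition Eset (g : nat -> V) (t : seq nat) : {set V} := [set x in map g t].

Lemma card_in (s : seq V) Y : uniq s -> #|[set x in s] :&: Y| = count (mem Y) s.
Proof.
move=> us; have -> : [set x in s] :&: Y = [set x in filter (mem Y) s].
  by apply/setP => x; rewrite !inE mem_filter andbC.
by rewrite cardsE -size_filter; apply/card_uniqP; rewrite filter_uniq.
Qed.

Lemma card_in0 (s : seq V) : uniq s -> #|[set x in s]| = size s.
Proof. by move=> us; rewrite cardsE; apply/card_uniqP. Qed.

Lemma tce (g : nat -> V) c : tight_cycle_edges (map g c) = map (Eset g) (trip c).
Proof.
rewrite /tight_cycle_edges /trip -!map_rot !zip_map2 -!map_comp; apply: eq_map.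
by case=> [[a b] d]; apply/setP => x; rewrite !inE /= orbA.
Qed.

Lemma base (s : seq V) (x0 : V) (lab m : seq nat) (X : nat -> {set V})
   (cs : seq (seq nat)) (H : {set {set V}}) :
  uniq s -> size lab = size s ->
  (forall i k, i < size s -> k < 3 -> (nth x0 s i \in X k) = (nth 3 lab i == k)) ->
  (forall x, x \in X 0 :|: X 1 :|: X 2 -> x \in s) ->
  [disjoint X 0 & X 1] -> [disjoint X 0 & X 2] -> [disjoint X 1 & X 2] ->
  nth 0 m 0 + nth 0 m 1 + nth 0 m 2 = 3 ->
  (forall T, (T \in H) = [&& #|T| == 3, #|T :&: X 0| == nth 0 m 0,
                         #|T :&: X 1| == nth 0 m 1 & #|T :&: X 2| == nth 0 m 2]) ->
  check lab m cs -> tight_cycle_decomposable 9 H.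
Proof.
move=> us slab HL Hcov d01 d02 d12 m3 HH /and4P[c1 c2 c3 c4].
set g := fun i => nth x0 s i.
set L := flatten (map trip cs).
have ginj i j : i < size s -> j < size s -> g i = g j -> i = j.
  by move=> ni nj /eqP; rewrite /g nth_uniq // => /eqP.
have okL t : t \in L -> tripok lab m t by move=> tL; exact: (allP c3).
have cntE t k : all (fun i => i < size lab) t -> k < 3 ->
    count (mem (X k)) (map g t) = cnt lab k t.
  move=> /allP at_ k3; rewrite count_map /cnt; apply: eq_in_count => i it /=.
  by rewrite /g HL // -slab; exact: at_.
have guniq t : all (fun i => i < size lab) t -> uniq t -> uniq (map g t).
  move=> /allP at_ ut; rewrite map_inj_in_uniq // => i j it jt.
  by apply: ginj; rewrite -slab; [exact: at_|exact: at_].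
have memE t i : all (fun i => i < size lab) t -> i < size s ->
    (g i \in Eset g t) = (i \in t).
  move=> /allP at_ ni; rewrite /Eset inE; apply/mapP/idP => [[j jt e]|it].
    by rewrite (ginj _ _ ni _ e) // -slab; exact: at_.
  by exists i.
have EsetP t t' : tripok lab m t -> tripok lab m t' -> Eset g t = Eset g t' ->
    sort3 t = sort3 t'.
  move=> /and4P[_ ut at_ _] /and4P[_ ut' at' _] e; apply/perm_sortP.
  - by move=> a b; exact: leq_total.
  - by move=> a b c; exact: leq_trans.
  - by move=> a b; rewrite -eqn_leq => /eqP.
  apply: uniq_perm => // i.
  case: (ltnP i (size s)) => ni.
    by rewrite -(memE _ _ at_ ni) -(memE _ _ at' ni) e.
  have nt u : all (fun i => i < size lab) u -> (i \in u) = false.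
    move=> /allP au; apply/negP => /au; rewrite slab; lia.
  by rewrite !nt.
exists (map (map g) cs); split.
  rewrite all_map; apply/allP => c cc; move/allP: c1 => /(_ c cc) /andP[/andP[sc uc] ac].
  by rewrite /= /tight_cycle size_map sc /= guniq.
have -> : flatten [seq tight_cycle_edges c | c <- map (map g) cs] = map (Eset g) L.
  rewrite /L map_flatten -!map_comp; congr flatten; apply: eq_map => c /=.
  by rewrite tce.
apply: uniq_perm.
- apply: (uniq_map_key (f := sort3)) => // t t' tL t'L; apply: EsetP; exact: okL.
- exact: enum_uniq.
move=> T; rewrite mem_enum HH; apply/mapP/idP.
  move=> [t tL ->]; have /and4P[/eqP st ut at_ /allP ck] := okL _ tL.
  rewrite /Eset card_in0 ?guniq // size_map st eqxx /=.
  rewrite !card_in ?guniq // !cntE //.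
  by rewrite !(eqP (ck _ _)) ?eqxx // mem_iota.
move=> /and4P[/eqP T3 /eqP a0 /eqP a1 /eqP a2].
have Ts : {subset T <= s}.
  move=> x xT; apply: Hcov.
  have : T \subset X 0 :|: X 1 :|: X 2.
    rewrite subE cardIU ?cardIU //; first lia.
    by apply: disjU.
  by move/subsetP; apply.
set t0 := map (index^~ s) (enum T).
have gt0 : map g t0 = enum T.
  rewrite -map_comp; apply: map_id_in => x; rewrite mem_enum => xT.
  by rewrite /= /g nth_index // Ts.
have at0 : all (fun i => i < size lab) t0.
  by apply/allP => i /mapP[x]; rewrite mem_enum slab => xT ->; rewrite index_mem Ts.
have ut0 : uniq t0 by apply: (@map_uniq _ _ g); rewrite gt0 enum_uniq.
have Et0 : Eset g t0 = T by rewrite /Eset gt0 set_enum.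
have ok0 : tripok lab m t0.
  apply/and4P; split => //.
    by rewrite size_map -cardE T3.
  apply/allP => k; rewrite mem_iota /= => k3.
  rewrite -cntE // -card_in ?gt0 ?enum_uniq // set_enum.
  by case: k k3 => [|[|[|]]] //= _; apply/eqP.
have [t tL st] : exists2 t, t \in L & sort3 t = sort3 t0.
  have : sort3 t0 \in map sort3 L.
    have : size t0 = 3 by apply/eqP; case/and4P: ok0.
    case: t0 at0 ok0 {gt0 ut0 Et0} => [|a [|b [|c []]]] //= /and4P[la lb lc _] ok0 _.
    move/allP: c4 => /(_ a); rewrite mem_iota /= => /(_ la) /allP /(_ b).
    rewrite mem_iota /= => /(_ lb) /allP /(_ c); rewrite mem_iota /= => /(_ lc).
    by rewrite ok0.
  by case/mapP => t tL e; exists t.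
exists t => //; rewrite -Et0 /Eset; apply/setP => x; rewrite !inE.
apply: perm_mem; apply: perm_map; exact/(perm_sortP leq_total leq_trans anti_leq).
Qed.

End Base.

Definition labof k0 k1 k2 := nseq k0 0 ++ nseq k1 1 ++ nseq k2 2.

Definition cs333 := [:: [:: 0; 4; 7; 2; 5; 8; 1; 3; 6]; [:: 0; 5; 6; 2; 3; 7; 1; 4; 8]; [:: 0; 3; 8; 2; 4; 6; 1; 5; 7]].
Definition cs63 := [:: [:: 0; 1; 6; 3; 5; 7; 2; 4; 8]; [:: 0; 2; 8; 3; 4; 6; 5; 1; 7]; [:: 0; 5; 8; 1; 4; 6; 2; 3; 7]; [:: 0; 3; 8; 5; 4; 7; 1; 2; 6]; [:: 0; 4; 7; 3; 1; 8; 2; 5; 6]].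
Definition cs93 := [:: [:: 0; 1; 9; 4; 5; 11; 2; 3; 10]; [:: 3; 4; 10; 7; 8; 9; 5; 6; 11]; [:: 6; 7; 11; 1; 2; 10; 8; 0; 9]; [:: 0; 2; 9; 3; 6; 10; 4; 1; 11]; [:: 3; 5; 10; 6; 0; 11; 7; 4; 9]; [:: 6; 8; 11; 0; 3; 9; 1; 7; 10]; [:: 0; 5; 11; 3; 1; 10; 8; 4; 9]; [:: 3; 8; 9; 6; 4; 11; 2; 7; 10]; [:: 6; 2; 10; 0; 7; 9; 5; 1; 11]; [:: 0; 4; 11; 8; 1; 9; 2; 5; 10]; [:: 3; 7; 9; 2; 4; 10; 5; 8; 11]; [:: 6; 1; 10; 5; 7; 11; 8; 2; 9]].

Lemma chk333 : check (labof 3 3 3) [:: 1; 1; 1] cs333. Proof. by vm_compute. Qed.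
Lemma chk63 : check (labof 6 3 0) [:: 2; 1; 0] cs63. Proof. by vm_compute. Qed.
Lemma chk93 : check (labof 9 3 0) [:: 2; 1; 0] cs93. Proof. by vm_compute. Qed.

Section Inst.
Variable V : finType.

Lemma inst (X : nat -> {set V}) k0 k1 k2 m cs (H : {set {set V}}) :
  0 < k0 -> #|X 0| = k0 -> #|X 1| = k1 -> #|X 2| = k2 ->
  [disjoint X 0 & X 1] -> [disjoint X 0 & X 2] -> [disjoint X 1 & X 2] ->
  nth 0 m 0 + nth 0 m 1 + nth 0 m 2 = 3 ->
  (forall T, (T \in H) = [&& #|T| == 3, #|T :&: X 0| == nth 0 m 0,
                         #|T :&: X 1| == nth 0 m 1 & #|T :&: X 2| == nth 0 m 2]) ->
  check (labof k0 k1 k2) m cs -> tight_cycle_decomposable 9 H.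
Proof.
move=> k0p c0 c1 c2 d01 d02 d12 m3 HH ch.
have [x0 _] : exists x, x \in X 0 by apply/set0Pn; rewrite -card_gt0 c0.
have key y j k : y \in X j -> j < 3 -> k < 3 -> (y \in X k) = (j == k).
  case: j => [|[|[|]]] // yj _; case: k => [|[|[|]]] //= _; rewrite ?yj //.
  - exact: disjointFr d01 yj.
  - exact: disjointFr d02 yj.
  - exact: disjointFl d01 yj.
  - exact: disjointFr d12 yj.
  - exact: disjointFl d02 yj.
  - exact: disjointFl d12 yj.
pose s := enum (X 0) ++ enum (X 1) ++ enum (X 2).
have ss : size s = k0 + k1 + k2 by rewrite /s !size_cat -!cardE c0 c1 c2 addnA.
apply: (@base V s x0 (labof k0 k1 k2) m X cs H) => //.
- rewrite /s !cat_uniq !enum_uniq /= andbT; apply/andP; split.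
    apply/hasPn => y; rewrite mem_cat !mem_enum => /orP[] yX; apply/negP => y0.
      by rewrite (disjointFr d01 y0) in yX.
    by rewrite (disjointFr d02 y0) in yX.
  by apply/hasPn => y; rewrite !mem_enum => yX; apply/negP => y0; rewrite (disjointFr d12 y0) in yX.
- by rewrite ss /labof !size_cat !size_nseq addnA.
- move=> i k; rewrite ss => ilt k3.
  rewrite /s /labof !nth_cat !size_nseq -!cardE c0 c1 !nth_nseq.
  case: ltnP => i0.
    apply: (key _ 0) => //; rewrite -mem_enum; apply: mem_nth; by rewrite -cardE c0.
  case: ltnP => i1.
    apply: (key _ 1) => //; rewrite -mem_enum; apply: mem_nth; rewrite -cardE c1; lia.
  have -> : i - k0 - k1 < k2 by lia.
  apply: (key _ 2) => //; rewrite -mem_enum; apply: mem_nth; rewrite -cardE c2; lia.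
- by move=> x; rewrite /s !mem_cat !mem_enum !inE orbA.
Qed.
End Inst.

Section Main.
Variable V : finType.
Implicit Types (A B C X Y Z W T : {set V}).

Lemma disj0 X : [disjoint X & (set0 : {set V})].
Proof. by rewrite -setI_eq0 setI0. Qed.

Lemma splitset A k l : #|A| = k + l -> exists A1 A2,
  [/\ A = A1 :|: A2, [disjoint A1 & A2], A1 \subset A, A2 \subset A &
      #|A1| = k /\ #|A2| = l].
Proof.
move=> cA; pose A1 := [set x in take k (enum A)].
have sA1 : A1 \subset A by apply/subsetP => x; rewrite inE => /mem_take; rewrite mem_enum.
have c1 : #|A1| = k.
  rewrite cardsE; move/card_uniqP: (take_uniq k (enum_uniq (mem A))) => ->.
  rewrite size_take -cardE cA; case: ltnP => //; lia.
exists A1, (A :\: A1); split => //.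
- apply/setP => x; rewrite in_setU in_setD.
  by case xA1: (x \in A1) => //=; rewrite (subsetP sA1 x xA1).
- by rewrite -setI_eq0; apply/eqP/setP => x; rewrite !inE; case: (x \in take k (enum A)).  
- exact: subsetDl.
- by rewrite cardsDS // c1 cA; lia.
Qed.

Lemma K3p_sym12 A B C : K3partite A B C = K3partite B A C.
Proof. by apply/setP => T; rewrite !inE; lia. Qed.
Lemma K3p_sym13 A B C : K3partite A B C = K3partite C B A.
Proof. by apply/setP => T; rewrite !inE; lia. Qed.

Lemma K3p_split A1 A2 B C :
  [disjoint A1 & A2] -> [disjoint A1 & B] -> [disjoint A1 & C] ->
  [disjoint A2 & B] -> [disjoint A2 & C] -> [disjoint B & C] ->
  K3partite (A1 :|: A2) B C = K3partite A1 B C :|: K3partite A2 B C /\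
  [disjoint K3partite A1 B C & K3partite A2 B C].
Proof.
move=> d1 d2 d3 d4 d5 d6; split.
  apply/setP => T; rewrite !inE cardIU //.
  by have := sum4 T d1 d2 d4 d3 d5 d6; lia.
rewrite -setI_eq0; apply/eqP/setP => T; rewrite !inE.
by have := sum4 T d1 d2 d4 d3 d5 d6; lia.
Qed.

Lemma Ks_splitB A B1 B2 :
  [disjoint A & B1] -> [disjoint A & B2] -> [disjoint B1 & B2] ->
  K3split A (B1 :|: B2) = K3split A B1 :|: K3split A B2 /\
  [disjoint K3split A B1 & K3split A B2].
Proof.
move=> d1 d2 d3; split.
  apply/setP => T; rewrite !inE cardIU //.
  by have := sum3 T d1 d2 d3; lia.
rewrite -setI_eq0; apply/eqP/setP => T; rewrite !inE.
by have := sum3 T d1 d2 d3; lia.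
Qed.

Lemma Ks_splitA A1 A2 B :
  [disjoint A1 & A2] -> [disjoint A1 & B] -> [disjoint A2 & B] ->
  K3split (A1 :|: A2) B = (K3split A1 B :|: K3split A2 B) :|: K3partite A1 A2 B /\
  [disjoint K3split A1 B & K3split A2 B] /\
  [disjoint K3split A1 B :|: K3split A2 B & K3partite A1 A2 B].
Proof.
move=> d1 d2 d3; split; [|split].
- apply/setP => T; rewrite !inE cardIU //.
  by have := sum3 T d1 d2 d3; lia.
- rewrite -setI_eq0; apply/eqP/setP => T; rewrite !inE.
  by have := sum3 T d1 d2 d3; lia.
- rewrite -setI_eq0; apply/eqP/setP => T; rewrite !inE.
  by have := sum3 T d1 d2 d3; lia.
Qed.

Lemma C3_split A B : [disjoint A & B] ->
  C3crossing A B = K3split A B :|: K3split B A /\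
  [disjoint K3split A B & K3split B A].
Proof.
move=> d; split.
  apply/setP => T; rewrite !inE subE cardIU // -!card_gt0.
  by have := sum2 T d; lia.
rewrite -setI_eq0; apply/eqP/setP => T; rewrite !inE.
by have := sum2 T d; lia.
Qed.

Lemma base333 A B C : [disjoint A & B] -> [disjoint A & C] -> [disjoint B & C] ->
  #|A| = 3 -> #|B| = 3 -> #|C| = 3 -> tight_cycle_decomposable 9 (K3partite A B C).
Proof.
move=> d1 d2 d3 cA cB cC.
apply: (@inst V (nth set0 [:: A; B; C]) 3 3 3 [:: 1; 1; 1] cs333 _ erefl cA cB cC d1 d2 d3 erefl _ chk333).
by move=> T; rewrite inE.
Qed.

Lemma base6 A B : [disjoint A & B] -> #|A| = 6 -> #|B| = 3 ->
  tight_cycle_decomposable 9 (K3split A B).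
Proof.
move=> d cA cB.
apply: (@inst V (nth set0 [:: A; B; set0]) 6 3 0 [:: 2; 1; 0] cs63 _ erefl cA cB (cards0 _) d (disj0 _) (disj0 _) erefl _ chk63).
by move=> T; rewrite inE /= setI0 cards0 andbT.
Qed.

Lemma base9 A B : [disjoint A & B] -> #|A| = 9 -> #|B| = 3 ->
  tight_cycle_decomposable 9 (K3split A B).
Proof.
move=> d cA cB.
apply: (@inst V (nth set0 [:: A; B; set0]) 9 3 0 [:: 2; 1; 0] cs93 _ erefl cA cB (cards0 _) d (disj0 _) (disj0 _) erefl _ chk93).
by move=> T; rewrite inE /= setI0 cards0 andbT.
Qed.

Lemma partA p : forall A B C, [disjoint A & B] -> [disjoint A & C] -> [disjoint B & C] ->
  #|A| = 3 * p.+1 -> #|B| = 3 -> #|C| = 3 -> tight_cycle_decomposable 9 (K3partite A B C).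
Proof.
elim: p => [|p IH] A B C d1 d2 d3 cA cB cC; first exact: base333.
have [A1 [A2 [eA d12 s1 s2 [c1 c2]]]] := splitset (k := 3) (l := 3 * p.+1) (A := A) ltac:(lia).
rewrite eA.
have [-> dd] := K3p_split d12 (disjointWl s1 d1) (disjointWl s1 d2)
   (disjointWl s2 d1) (disjointWl s2 d2) d3.
apply: dec_union dd _ _.
  exact: base333 (disjointWl s1 d1) (disjointWl s1 d2) d3 c1 cB cC.
exact: IH (disjointWl s2 d1) (disjointWl s2 d2) d3 c2 cB cC.
Qed.

Lemma partAB q : forall p A B C, [disjoint A & B] -> [disjoint A & C] -> [disjoint B & C] ->
  #|A| = 3 * p.+1 -> #|B| = 3 * q.+1 -> #|C| = 3 -> tight_cycle_decomposable 9 (K3partite A B C).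
Proof.
elim: q => [|q IH] p A B C d1 d2 d3 cA cB cC; first exact: partA d1 d2 d3 cA _ cC.
have [B1 [B2 [eB d12 s1 s2 [c1 c2]]]] := splitset (k := 3) (l := 3 * q.+1) (A := B) ltac:(lia).
rewrite eB.
rewrite disjoint_sym in d1.
rewrite K3p_sym12.
have [-> dd] := K3p_split d12 (disjointWl s1 d1) (disjointWl s1 d3)
   (disjointWl s2 d1) (disjointWl s2 d3) d2.
rewrite disjoint_sym in d1.
apply: dec_union dd _ _; rewrite -K3p_sym12.
  exact: partA (disjointWr s1 d1) d2 (disjointWl s1 d3) cA c1 cC.
exact: IH (disjointWr s2 d1) d2 (disjointWl s2 d3) cA c2 cC.
Qed.

Lemma partABC r : forall p q A B C, [disjoint A & B] -> [disjoint A & C] -> [disjoint B & C] ->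
  #|A| = 3 * p.+1 -> #|B| = 3 * q.+1 -> #|C| = 3 * r.+1 ->
  tight_cycle_decomposable 9 (K3partite A B C).
Proof.
elim: r => [|r IH] p q A B C d1 d2 d3 cA cB cC; first exact: partAB d1 d2 d3 cA cB _.
have [C1 [C2 [eC d12 s1 s2 [c1 c2]]]] := splitset (k := 3) (l := 3 * r.+1) (A := C) ltac:(lia).
rewrite eC.
have d2' : [disjoint C & A] by rewrite disjoint_sym.
have d3' : [disjoint C & B] by rewrite disjoint_sym.
have d1' : [disjoint B & A] by rewrite disjoint_sym.
rewrite K3p_sym13.
have [-> dd] := K3p_split d12 (disjointWl s1 d3') (disjointWl s1 d2')
   (disjointWl s2 d3') (disjointWl s2 d2') d1'.
apply: dec_union dd _ _; rewrite -K3p_sym13.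
  exact: partAB d1 (disjointWr s1 d2) (disjointWr s1 d3) cA cB c1.
exact: IH d1 (disjointWr s2 d2) (disjointWr s2 d3) cA cB c2.
Qed.

Theorem part1 (A B C : {set V}) (p q r : nat) :
  0 < p -> 0 < q -> 0 < r ->
  [disjoint A & B] -> [disjoint A & C] -> [disjoint B & C] ->
  #|A| = 3 * p -> #|B| = 3 * q -> #|C| = 3 * r ->
  tight_cycle_decomposable 9 (K3partite A B C).
Proof.
case: p => // p; case: q => // q; case: r => // r _ _ _.
exact: partABC.
Qed.

End Main.

Section Main2.
Variable V : finType.
Implicit Types (A B C : {set V}).

Lemma Ks3 n : forall p A B, 2 <= p -> p <= n -> [disjoint A & B] ->
  #|A| = 3 * p -> #|B| = 3 -> tight_cycle_decomposable 9 (K3split A B).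
Proof.
elim: n => [|n IH] p A B p2 pn d cA cB; first lia.
case: (ltnP p 4) => p4.
  have [e|e] : p = 2 \/ p = 3 by lia.
    by rewrite e in cA; exact: base6.
  by rewrite e in cA; exact: base9.
have [A1 [A2 [eA d12 s1 s2 [c1 c2]]]] := splitset (k := 6) (l := 3 * (p - 2)) (A := A) ltac:(lia).
rewrite eA.
have [-> [dd1 dd2]] := Ks_splitA d12 (disjointWl s1 d) (disjointWl s2 d).
apply: dec_union dd2 _ _; last first.
  apply: (@part1 V A1 A2 B 2 (p - 2) 1) => //; try lia.
  exact: disjointWl s1 d. exact: disjointWl s2 d.
apply: dec_union dd1 _ _.
  exact: base6 (disjointWl s1 d) c1 cB.
apply: (IH (p - 2)) (disjointWl s2 d) c2 cB; lia.
Qed.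

Lemma Ksq q : forall p A B, 2 <= p -> [disjoint A & B] ->
  #|A| = 3 * p -> #|B| = 3 * q.+1 -> tight_cycle_decomposable 9 (K3split A B).
Proof.
elim: q => [|q IH] p A B p2 d cA cB; first exact: (Ks3 (n := p)) d cA cB.
have [B1 [B2 [eB d12 s1 s2 [c1 c2]]]] := splitset (k := 3) (l := 3 * q.+1) (A := B) ltac:(lia).
rewrite eB.
have [-> dd] := Ks_splitB (disjointWr s1 d) (disjointWr s2 d) d12.
apply: dec_union dd _ _.
  exact: (Ks3 (n := p)) (disjointWr s1 d) cA c1.
exact: IH (disjointWr s2 d) cA c2.
Qed.

Theorem part2 A B (p q : nat) : 2 <= p -> 1 <= q -> [disjoint A & B] ->
  #|A| = 3 * p -> #|B| = 3 * q -> tight_cycle_decomposable 9 (K3split A B).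
Proof. by case: q => // q p2 _; exact: Ksq. Qed.

Theorem part3 A B (p q : nat) : 2 <= p -> 2 <= q -> [disjoint A & B] ->
  #|A| = 3 * p -> #|B| = 3 * q -> tight_cycle_decomposable 9 (C3crossing A B).
Proof.
move=> p2 q2 d cA cB; have [-> dd] := C3_split d.
apply: dec_union dd _ _.
  by apply: (part2 (p := p) (q := q)) => //; lia.
by apply: (part2 (p := q) (q := p)) => //; [lia | rewrite disjoint_sym].
Qed.
End Main2.

Theorem lemma11 :
  (forall (V : finType) (A B C : {set V}) (p q r : nat),
      0 < p -> 0 < q -> 0 < r ->
      [disjoint A & B] -> [disjoint A & C] -> [disjoint B & C] ->
      #|A| = 3 * p -> #|B| = 3 * q -> #|C| = 3 * r ->
      tight_cycle_decomposable 9 (K3partite A B C)) /\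
  (forall (V : finType) (A B : {set V}) (p q : nat),
      2 <= p -> 1 <= q -> [disjoint A & B] ->
      #|A| = 3 * p -> #|B| = 3 * q ->
      tight_cycle_decomposable 9 (K3split A B)) /\
  (forall (V : finType) (A B : {set V}) (p q : nat),
      2 <= p -> 2 <= q -> [disjoint A & B] ->
      #|A| = 3 * p -> #|B| = 3 * q ->
      tight_cycle_decomposable 9 (C3crossing A B)).
Proof.
split; [|split].
- move=> V A B C p q r; exact: part1.
- move=> V A B p q; exact: part2.
- move=> V A B p q; exact: part3.
Qed.
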